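(* Let $n\ge3$ and suppose $T=T_\lambda(r,m)$ acts linearly and inner faithfully on $\Bbbk\overline{Q}$ so that $g$ acts by a reflection: $g\cdot e_i=e_{n-(d+i)}$, $g\cdot a_i=\mu_ia^*_{n-(d+i+1)}$, $g\cdot a_i^*=\mu_i^*a_{n-(d+i+1)}$ for some integer $0\le d\le n-1$ and $\mu_i,\mu_i^*\in\Bbbk^\times$, and that this action descends to an action on $\Pi_Q$. Let $\sigma$ be the quiver-Taft map. (I) If $j$ is a vertex with $g\cdot j=j$ and $c_j,c_j^*\in\Bbbk$ satisfy $\sigma(a_j)=c_ja^*_{j-1}$, $\sigma(a_j^* )=c_j^*a_j^*$, then $c_j^*=-\mu_j^{-1}c_j$; and if $c_j\neq0$ then $\mu_i\mu_i^*=1$ for all $i$. (II) If $k$ is a vertex with $g\cdot k=k+1$ and $g\cdot(k+1)=k$, and $c_k,c_k^*\in\Bbbk$ satisfy $\sigma(a_k)=c_ke_k$, $\sigma(a_k^* )=c_k^*e_{k+1}$, and if for all $i$ the identity $a_i^*\sigma(a_i)+\sigma(a_i^* )(g\cdot a_i)-a_{i+1}\sigma(a_{i+1}^* )-\sigma(a_{i+1})(g\cdot a_{i+1}^* )=0$ holds in $\Pi_Q$, then $c_k=-\mu_kc_k^*$; and if $c_k\neq0$ then $\lambda=-1$ and $\mu_i\mu_i^*=1$ for all $i$.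
   Context: Let $\Bbbk$ be a field, $r>1$ and $m$ positive integers with $r\mid m$, and $\lambda\in\Bbbk$ a primitive $r$-th root of unity, with $r$ coprime to the characteristic of $\Bbbk$. The generalized Taft algebra $T=T_\lambda(r,m)$ is the Hopf algebra generated by $g,x$ with relations $gx=\lambda xg$, $g^m=1$, $x^r=0$, $\Delta(g)=g\otimes g$, $\Delta(x)=1\otimes x+x\otimes g$, $\varepsilon(g)=1,\varepsilon(x)=0$, $S(g)=g^{-1}$, $S(x)=-xg^{-1}$. An action of $T$ on an algebra $A$ is a $T$-module algebra structure; so $g$ acts by an algebra automorphism and $x\cdot(ab)=a(x\cdot b)+(x\cdot a)(g\cdot b)$. It is inner faithful if no nonzero Hopf ideal $I$ of $T$ satisfies $I\cdot A=0$. Vertex indices are taken modulo $n$. $\overline{Q}$ has vertices $0,\dots,n-1$ and arrows $a_i:i\to i+1$, $a_i^*:i+1\to i$; in $\Bbbk\overline{Q}$, $e_i$ is the trivial path at $i$, $s(a),t(a)$ source and target, and $pq$ is concatenation ($p$ then $q$) if $t(p)=s(q)$, else $0$. $\Pi_Q=\Bbbk\overline{Q}/(\Omega)$, $(\Omega)$ the ideal generated by $a_i^*a_i-a_{i+1}a_{i+1}^*$; the action descends to $\Pi_Q$ if $(\Omega)$ is stable under $g$ and $x$. A linear action: $g$ acts by a path-length-preserving automorphism ($g\cdot e_i=e_{g\cdot i}$) and $x$ maps vertices into the span of vertices and arrows into the span of vertices and arrows. Then there are scalars $\gamma_i$ with $x\cdot e_i=\gamma_ie_i-\gamma_i\lambda^{-1}e_{g\cdot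 i}$; the quiver-Taft map $\sigma$ is the linear map on the span of vertices and arrows with $\sigma(e_i)=0$ and $\sigma(a)=x\cdot a-\gamma_{t(a)}a+\gamma_{s(a)}\lambda^{-1}(g\cdot a)$ for arrows $a$. *)

(* Defs.v *)
From mathcomp Require Import all_boot all_algebra.
Set Implicit Arguments. Unset Strict Implicit. Unset Printing Implicit Defensive.
Import GRing.Theory.
Local Open Scope ring_scope.

(* The double quiver \overline{Q} of the cyclic quiver with n vertices.      *)
(* Vertices: 'Z_n (this is Z/nZ for n >= 2; the theorem assumes n >= 3).    *)
(* Arrows: (i, false) = a_i : i -> i+1 ,  (i, true) = a_i^* : i+1 -> i.     *)
(* A path is a pair (start vertex, list of arrows); (i, [::]) is e_i.         *)
(* The path algebra k\overline{Q} is the set of finitely supported functions *)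
(* paths -> k vanishing on non-composable pairs, with concatenation product   *)
(* (pq = p then q).                                                          *)

Section Quiver.
Variable n : nat.

Definition arrow := ('Z_n * bool)%type.
Definition qpath := ('Z_n * seq arrow)%type.

Definition asrc (a : arrow) : 'Z_n := if a.2 then a.1 + 1 else a.1.
Definition atgt (a : arrow) : 'Z_n := if a.2 then a.1 else a.1 + 1.

Fixpoint composable (v : 'Z_n) (s : seq arrow) : bool :=
  if s is a :: s' then (asrc a == v) && composable (atgt a) s' else true.

Definition valid_path (p : qpath) : bool := composable p.1 p.2.

Definition pend (p : qpath) : 'Z_n := last p.1 (map atgt p.2).

Variable k : fieldType.

Definition KQ := qpath -> k.

Definition kzero : KQ := fun _ => 0.
Definition kadd (f h : KQ) : KQ := fun p => f p + h p.
Definition kopp (f : KQ) : KQ := fun p => - f p.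
Definition kscale (c : k) (f : KQ) : KQ := fun p => c * f p.
Definition kmul (f h : KQ) : KQ := fun p =>
  \sum_(i < (size p.2).+1)
     f (p.1, take i p.2) * h (pend (p.1, take i p.2), drop i p.2).
Definition kone : KQ := fun p => if p.2 is [::] then 1 else 0.

Definition kpath (q : qpath) : KQ := fun p => (p == q)%:R.
Definition ev (i : 'Z_n) : KQ := kpath (i, [::]).
Definition arr (a : arrow) : KQ := kpath (asrc a, [:: a]).
Definition a_ (i : 'Z_n) : KQ := arr (i, false).
Definition ast (i : 'Z_n) : KQ := arr (i, true).

Definition inkQ (f : KQ) : Prop :=
  (forall p, ~~ valid_path p -> f p = 0) /\
  exists s : seq qpath, forall p, p \notin s -> f p = 0.

(* preprojective relation at vertex i+1: a_i^* a_i - a_{i+1} a_{i+1}^* *)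
Definition omega (i : 'Z_n) : KQ :=
  kadd (kmul (ast i) (a_ i)) (kopp (kmul (a_ (i + 1)) (ast (i + 1)))).

Inductive inOmega : KQ -> Prop :=
| inOmega0 : inOmega kzero
| inOmega_gen u i v : inkQ u -> inkQ v -> inOmega (kmul (kmul u (omega i)) v)
| inOmega_add f h : inOmega f -> inOmega h -> inOmega (kadd f h).

(* An action is given by the operators G (action of g) and X (action of x).  *)

Variables (r m : nat) (lam : k).

Definition kQ_linear (F : KQ -> KQ) : Prop :=
  (forall f, inkQ f -> inkQ (F f)) /\
  (forall f h, inkQ f -> inkQ h -> F (kadd f h) = kadd (F f) (F h)) /\
  (forall c f, inkQ f -> F (kscale c f) = kscale c (F f)).

(* T-module algebra structure: G, X linear on kQ, satisfying the defining
   relations g^m = 1, x^r = 0, g x = lam x g of T, and the module-algebra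
   axioms h.(ab) = (h1.a)(h2.b), h.1 = eps(h) 1 for h = g, x. *)
Record taft_module_algebra (G X : KQ -> KQ) : Prop := {
  tma_G_lin : kQ_linear G;
  tma_X_lin : kQ_linear X;
  tma_gm : forall f, inkQ f -> iter m G f = f;
  tma_xr : forall f, inkQ f -> iter r X f = kzero;
  tma_gx : forall f, inkQ f -> G (X f) = kscale lam (X (G f));
  tma_G_mul : forall f h, inkQ f -> inkQ h -> G (kmul f h) = kmul (G f) (G h);
  tma_G_one : G kone = kone;
  tma_X_mul : forall f h, inkQ f -> inkQ h ->
     X (kmul f h) = kadd (kmul f (X h)) (kmul (X f) (G h));
  tma_X_one : X kone = kzero
}.

(* ---- The Hopf algebra T = T_lam(r,m), with basis g^i x^j (i<m, j<r). ---- *)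
Definition Tt := {ffun 'I_m * 'I_r -> k}.
Definition TTt := {ffun ('I_m * 'I_r) * ('I_m * 'I_r) -> k}.

Definition Tscale (c : k) (t : Tt) : Tt := [ffun p => c * t p].
Definition TTscale (c : k) (z : TTt) : TTt := [ffun p => c * z p].

(* bas i j = g^i x^j (g-exponent taken mod m, and = 0 when j >= r) *)
Definition bas (i j : nat) : Tt :=
  [ffun p : 'I_m * 'I_r => (((p.1 : nat) == (i %% m)%N) && ((p.2 : nat) == j))%:R].

(* product: (g^i x^j)(g^k x^l) = lam^(-jk) g^(i+k) x^(j+l) *)
Definition mulT (t u : Tt) : Tt :=
  \sum_(p : 'I_m * 'I_r) \sum_(q : 'I_m * 'I_r)
     Tscale (t p * u q * lam ^- (p.2 * q.1)) (bas (p.1 + q.1) (p.2 + q.2)).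

Definition oneT : Tt := bas 0 0.

Definition tens (t u : Tt) : TTt := [ffun q => t q.1 * u q.2].

Definition mulTT (z w : TTt) : TTt :=
  \sum_(q1 : ('I_m * 'I_r) * ('I_m * 'I_r)) \sum_(q2 : ('I_m * 'I_r) * ('I_m * 'I_r))
    TTscale (z q1 * w q2)
      (tens (mulT (bas q1.1.1 q1.1.2) (bas q2.1.1 q2.1.2))
            (mulT (bas q1.2.1 q1.2.2) (bas q2.2.1 q2.2.2))).

(* comultiplication: Delta(g) = g (x) g, Delta(x) = 1 (x) x + x (x) g,
   extended multiplicatively: Delta(g^i x^j) = Delta(g)^i Delta(x)^j *)
Definition DeltaG : TTt := tens (bas 1 0) (bas 1 0).
Definition DeltaX : TTt := tens oneT (bas 0 1) + tens (bas 0 1) (bas 1 0).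
Definition DeltaB (p : 'I_m * 'I_r) : TTt :=
  mulTT (iter p.1 (mulTT DeltaG) (tens oneT oneT)) (iter p.2 (mulTT DeltaX) (tens oneT oneT)).
Definition DeltaT (t : Tt) : TTt := \sum_(p : 'I_m * 'I_r) TTscale (t p) (DeltaB p).

Definition epsT (t : Tt) : k := \sum_(p : 'I_m * 'I_r) ((p.2 : nat) == 0)%:R * t p.

(* antipode (anti-multiplicative): S(g) = g^{-1} = g^(m-1), S(x) = - x g^{-1},
   S(g^i x^j) = S(x)^j S(g)^i *)
Definition Sx : Tt := - mulT (bas 0 1) (bas m.-1 0).
Definition SB (p : 'I_m * 'I_r) : Tt :=
  mulT (iter p.2 (mulT Sx) oneT) (iter p.1 (mulT (bas m.-1 0)) oneT).
Definition ST (t : Tt) : Tt := \sum_(p : 'I_m * 'I_r) Tscale (t p) (SB p).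

(* z \in I (x) T + T (x) I *)
Definition in_coideal_target (I : Tt -> Prop) (z : TTt) : Prop :=
  exists s : seq (Tt * Tt),
    (forall u, u \in s -> I u.1 \/ I u.2) /\ z = \sum_(u <- s) tens u.1 u.2.

Definition hopf_ideal (I : Tt -> Prop) : Prop :=
  [/\ I 0,
      (forall t u, I t -> I u -> I (t + u)),
      (forall c t, I t -> I (Tscale c t)),
      (forall t u, I t -> I (mulT t u) /\ I (mulT u t)) &
      (forall t, I t -> [/\ epsT t = 0, in_coideal_target I (DeltaT t) & I (ST t)])].

Definition actT (G X : KQ -> KQ) (t : Tt) (f : KQ) : KQ := fun q =>
  \sum_(p : 'I_m * 'I_r) t p * iter p.1 G (iter p.2 X f) q.

Definition inner_faithful (G X : KQ -> KQ) : Prop :=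
  forall I : Tt -> Prop, hopf_ideal I ->
    (forall t f, I t -> inkQ f -> actT G X t f = kzero) ->
    forall t, I t -> t = 0.

(* x maps vertices into the span of vertices, arrows into the span of
   vertices and arrows *)
Definition x_linear (X : KQ -> KQ) : Prop :=
  (forall i p, (0 < size p.2)%N -> X (ev i) p = 0) /\
  (forall a p, (1 < size p.2)%N -> X (arr a) p = 0).

Definition sigma (G X : KQ -> KQ) (gam : 'Z_n -> k) (a : arrow) : KQ :=
  kadd (kadd (X (arr a)) (kscale (- gam (atgt a)) (arr a)))
       (kscale (gam (asrc a) * lam^-1) (G (arr a))).

End Quiver.

Arguments kzero {n k}.
Arguments kone {n k}.
Arguments kpath {n k}.
Arguments ev {n k}.
Arguments arr {n k}.
Arguments a_ {n k}.
Arguments ast {n k}.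
Arguments omega {n k}.

(* Main.v *)
Require Import Defs.
From mathcomp Require Import all_boot all_algebra ring.
From Stdlib Require Import FunctionalExtensionality.
Set Implicit Arguments. Unset Strict Implicit. Unset Printing Implicit Defensive.
Import GRing.Theory.
Local Open Scope ring_scope.


Section Basic.
Variables (n : nat) (k : fieldType).
Local Notation KQ := (KQ n k).

Lemma kmul0 (f h : KQ) s : kmul f h (s, [::]) = f (s, [::]) * h (s, [::]).
Proof. by rewrite /kmul /= big_ord_recl big_ord0 addr0. Qed.

Lemma kmul1 (f h : KQ) s x : kmul f h (s, [:: x]) =
  f (s, [::]) * h (s, [:: x]) + f (s, [:: x]) * h (atgt x, [::]).
Proof. by rewrite /kmul /= !big_ord_recl big_ord0 addr0. Qed.

Lemma kmul2 (f h : KQ) s x y : kmul f h (s, [:: x; y]) =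
  f (s, [::]) * h (s, [:: x; y]) + f (s, [:: x]) * h (atgt x, [:: y])
  + f (s, [:: x; y]) * h (atgt y, [::]).
Proof. by rewrite /kmul /= !big_ord_recl big_ord0 addr0 addrA. Qed.

Lemma kpathE (q p : qpath n) : kpath q p = (p == q)%:R :> k.
Proof. by []. Qed.

Lemma kmul_kpath_zero (p1 p2 q : qpath n) :
  q.2 != p1.2 ++ p2.2 -> kmul (kpath p1) (kpath p2) q = 0 :> k.
Proof.
move=> hq; rewrite /kmul big1 // => i _.
rewrite !kpathE.
case e1: ((q.1, take i q.2) == p1); last by rewrite mul0r.
case e2: ((pend (q.1, take i q.2), drop i q.2) == p2); last by rewrite mulr0.
move: hq; move/eqP: e1 => <-; move/eqP: e2 => <- /=.
by rewrite cat_take_drop eqxx.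
Qed.

Lemma kmul_van_r (S : seq (arrow n) -> bool) (f h : KQ) :
  (forall p, S p.2 -> h p = 0) -> (forall l i, S l -> S (drop i l)) ->
  forall p, S p.2 -> kmul f h p = 0.
Proof.
move=> hh hS p Sp; rewrite /kmul big1 // => i _.
by rewrite hh ?mulr0 //=; apply: hS.
Qed.

Lemma kmul_van_l (S : seq (arrow n) -> bool) (f h : KQ) :
  (forall p, S p.2 -> f p = 0) -> (forall l i, S l -> S (take i l)) ->
  forall p, S p.2 -> kmul f h p = 0.
Proof.
move=> hh hS p Sp; rewrite /kmul big1 // => i _.
by rewrite hh ?mul0r //=; apply: hS.
Qed.

Definition S1 (l : seq (arrow n)) := all (fun a : arrow n => a.2) l.
Definition S2 (l : seq (arrow n)) := (size l < 2)%N.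

Lemma S1_take l i : S1 l -> S1 (take i l).
Proof. by rewrite /S1 -{1}(cat_take_drop i l) all_cat => /andP[]. Qed.
Lemma S1_drop l i : S1 l -> S1 (drop i l).
Proof. by rewrite /S1 -{1}(cat_take_drop i l) all_cat => /andP[]. Qed.
Lemma S2_take l i : S2 l -> S2 (take i l).
Proof. rewrite /S2 => h; apply: leq_ltn_trans h; rewrite size_take_min; exact: geq_minr. Qed.
Lemma S2_drop l i : S2 l -> S2 (drop i l).
Proof. rewrite /S2 size_drop => h; apply: leq_ltn_trans h; exact: leq_subr. Qed.

Lemma omega_S1 i p : S1 p.2 -> omega i p = 0 :> k.
Proof.
move=> h; rewrite /omega /kadd /kopp /a_ /ast /arr !kmul_kpath_zero ?oppr0 ?addr0 //=.
  by apply/negP => /eqP e; move: h; rewrite /S1 e.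
by apply/negP => /eqP e; move: h; rewrite /S1 e.
Qed.

Lemma omega_S2 i p : S2 p.2 -> omega i p = 0 :> k.
Proof.
move=> h; rewrite /omega /kadd /kopp /a_ /ast /arr !kmul_kpath_zero ?oppr0 ?addr0 //=.
  by apply/negP => /eqP e; move: h; rewrite /S2 e.
by apply/negP => /eqP e; move: h; rewrite /S2 e.
Qed.

Lemma inOmega_S1 (f : KQ) p : inOmega f -> S1 p.2 -> f p = 0.
Proof.
move=> hf; elim: hf p => [p _ //|u i v _ _ p hp|f1 h1 _ IH1 _ IH2 p hp].
  apply: (kmul_van_l (S := S1)) hp; last exact: S1_take.
  move=> q hq; apply: (kmul_van_r (S := S1)) hq; last exact: S1_drop.
  by move=> q' hq'; apply: omega_S1.
by rewrite /kadd IH1 // IH2 // addr0.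
Qed.

Lemma inOmega_S2 (f : KQ) p : inOmega f -> S2 p.2 -> f p = 0.
Proof.
move=> hf; elim: hf p => [p _ //|u i v _ _ p hp|f1 h1 _ IH1 _ IH2 p hp].
  apply: (kmul_van_l (S := S2)) hp; last exact: S2_take.
  move=> q hq; apply: (kmul_van_r (S := S2)) hq; last exact: S2_drop.
  by move=> q' hq'; apply: omega_S2.
by rewrite /kadd IH1 // IH2 // addr0.
Qed.

End Basic.


Section B.
Variables (n : nat) (k : fieldType).
Local Notation KQ := (KQ n k).

Lemma kmul3 (u W w : KQ) s x y : (forall p, S2 p.2 -> W p = 0) ->
  kmul (kmul u W) w (s, [:: x; y]) = u (s, [::]) * W (s, [:: x; y]) * w (atgt y, [::]).
Proof.
move=> hW.
have hz p : S2 p.2 -> kmul u W p = 0 by apply: (kmul_van_r (S := @S2 n)) hW _ p; exact: S2_drop.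
rewrite kmul2 kmul2 !hz //.
rewrite (hW (atgt x, [:: y])) // (hW (atgt y, [::])) //.
by rewrite !mul0r !mulr0 !add0r !addr0.
Qed.

Lemma omega_phi (i v : 'Z_n) :
  omega i (v, [:: (v - 1, true); (v - 1, false)]) + omega i (v, [:: (v, false); (v, true)]) = 0 :> k.
Proof.
rewrite /omega /kadd /kopp !kmul2 /a_ /ast /arr !kpathE /=.
rewrite !xpair_eqE /= !eqseq_cons !xpair_eqE /= !andbT !andbF /=.
rewrite /asrc /atgt /= subr_eq.
case: (eqVneq v (i + 1)) => [->|ne]; rewrite /= ?eqxx ?(negbTE ne) /= ?andbF ?mul0r ?mulr0 ?mul1r ?add0r ?addr0 ?subr0 ?oppr0 ?subrr //.
Qed.

Lemma inOmega_phi (f : KQ) (v : 'Z_n) : inOmega f ->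
  f (v, [:: (v - 1, true); (v - 1, false)]) + f (v, [:: (v, false); (v, true)]) = 0.
Proof.
move=> hf; elim: hf => [|u i w _ _|f1 h1 _ IH1 _ IH2].
- by rewrite /kzero addr0.
- rewrite !kmul3; try by move=> p hp; apply: omega_S2.
  rewrite /atgt /= subrK -mulrDl -mulrDr omega_phi.
  by rewrite mulr0 mul0r.
- by rewrite /kadd addrACA IH1 IH2 addr0.
Qed.

End B.


Section C.
Variables (n : nat) (k : fieldType).
Local Notation KQ := (KQ n k).

Lemma composable_cat (s : 'Z_n) l1 l2 :
  composable s (l1 ++ l2) = composable s l1 && composable (last s (map (@atgt n) l1)) l2.
Proof. by elim: l1 s => [|a l1 IH] s //=; rewrite IH andbA. Qed.

Lemma inkQ_kpath (q : qpath n) : valid_path q -> inkQ (kpath q : KQ).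
Proof.
move=> hq; split.
  move=> p hp; rewrite kpathE; case: eqP => // e; by rewrite e hq in hp.
exists [:: q] => p; rewrite inE kpathE => /negbTE -> //.
Qed.

Lemma inkQ_ev i : inkQ (ev i : KQ).
Proof. exact: inkQ_kpath. Qed.
Lemma inkQ_arr a : inkQ (arr a : KQ).
Proof. by apply: inkQ_kpath; rewrite /valid_path /= eqxx. Qed.

Lemma inkQ_kzero : inkQ (kzero : KQ).
Proof. by split => //; exists [::]. Qed.

Lemma inkQ_kadd (f h : KQ) : inkQ f -> inkQ h -> inkQ (kadd f h).
Proof.
move=> [f1 [sf f2]] [h1 [sh h2]]; split.
  by move=> p hp; rewrite /kadd f1 // h1 // addr0.
exists (sf ++ sh) => p; rewrite mem_cat negb_or => /andP[p1 p2].
by rewrite /kadd f2 // h2 // addr0.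
Qed.

Lemma inkQ_kscale c (f : KQ) : inkQ f -> inkQ (kscale c f).
Proof.
move=> [f1 [sf f2]]; split; first by move=> p hp; rewrite /kscale f1 // mulr0.
by exists sf => p hp; rewrite /kscale f2 // mulr0.
Qed.

Lemma kopp_scale (f : KQ) : kopp f = kscale (-1) f.
Proof. by apply: functional_extensionality => p; rewrite /kopp /kscale mulN1r. Qed.

Lemma inkQ_kopp (f : KQ) : inkQ f -> inkQ (kopp f).
Proof. by rewrite kopp_scale; apply: inkQ_kscale. Qed.

Lemma inkQ_kmul_kpath (p1 p2 : qpath n) : valid_path p1 -> valid_path p2 ->
  inkQ (kmul (kpath p1) (kpath p2) : KQ).
Proof.
move=> v1 v2; split.
  move=> p hp; rewrite /kmul big1 // => i _; rewrite !kpathE.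
  case e1: (_ == p1); last by rewrite mul0r.
  case e2: (_ == p2); last by rewrite mulr0.
  suff : valid_path p by rewrite (negbTE hp).
  move/eqP: e1 v1 => <-; move/eqP: e2 v2 => <-.
  rewrite /valid_path /pend /= => h1 h2.
  by rewrite -(cat_take_drop i p.2) composable_cat h1 h2.
exists [:: (p1.1, p1.2 ++ p2.2)] => p; rewrite inE => hp.
case: (eqVneq p.2 (p1.2 ++ p2.2)) => e; last by rewrite kmul_kpath_zero.
rewrite /kmul big1 // => i _; rewrite !kpathE.
case e1: (_ == p1); last by rewrite mul0r.
move/eqP: e1 hp => <- /=.
case e2: (_ == p2); last by rewrite mulr0.
by move/eqP: e2 => <- /=; rewrite cat_take_drop -surjective_pairing eqxx.
Qed.

Lemma inkQ_kone : inkQ (kone : KQ).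
Proof.
split; first by case=> s [|a l].
exists [seq (v, [::]) | v <- enum 'Z_n] => [[s [|a l]]] //.
by move/negP; case; apply/mapP; exists s; rewrite ?mem_enum.
Qed.

Lemma kmul_kone_l (f : KQ) : kmul kone f = f.
Proof.
apply: functional_extensionality => -[s l].
rewrite /kmul big_ord_recl /= take0 drop0 mul1r big1 ?addr0 // => i _.
case: l i => [|a l] i; first by case: i.
by rewrite /= mul0r.
Qed.

Lemma kmul_kone_r (f : KQ) : kmul f kone = f.
Proof.
apply: functional_extensionality => -[s l].
rewrite /kmul big_ord_recr /= take_size drop_size mulr1 big1 ?add0r // => i _.
case e: (drop _ l) => [|a l']; last by rewrite mulr0.
have := ltn_ord i; by rewrite -subn_gt0 -size_drop e.
Qed.

Lemma inOmega_omega (i : 'Z_n) : inOmega (omega i : KQ).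
Proof.
have := inOmega_gen i inkQ_kone inkQ_kone.
by rewrite kmul_kone_l kmul_kone_r.
Qed.

Definition ksum (T : Type) (s : seq T) (F : T -> KQ) : KQ :=
  foldr (fun x acc => kadd (F x) acc) kzero s.

Lemma ksumE (T : Type) (s : seq T) (F : T -> KQ) p :
  ksum s F p = \sum_(x <- s) F x p.
Proof.
elim: s => [|x s IH]; first by rewrite big_nil.
by rewrite big_cons /= /kadd IH.
Qed.

Lemma inkQ_ksum (T : Type) (s : seq T) (F : T -> KQ) :
  (forall x, inkQ (F x)) -> inkQ (ksum s F).
Proof.
move=> hF; elim: s => [|x s IH] /=; first exact: inkQ_kzero.
exact: inkQ_kadd.
Qed.

End C.


Section D.
Variables (n : nat) (k : fieldType) (d : nat).
Local Notation KQ := (KQ n k).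
Local Notation IX := ('Z_n + arrow n)%type.
Variables (G : KQ -> KQ) (mu mus : 'Z_n -> k).
Hypothesis Glin : kQ_linear G.
Hypothesis HGe : forall i, G (ev i) = ev (n%:R - (d%:R + i)).
Hypothesis HGa : forall i, G (a_ i) = kscale (mu i) (ast (n%:R - (d%:R + i + 1))).
Hypothesis HGs : forall i, G (ast i) = kscale (mus i) (a_ (n%:R - (d%:R + i + 1))).

Definition gv (v : 'Z_n) : 'Z_n := n%:R - (d%:R + v).
Definition garr (a : arrow n) : arrow n := (n%:R - (d%:R + a.1 + 1), ~~ a.2).
Definition bp (x : IX) : qpath n :=
  match x with inl v => (v, [::]) | inr a => (asrc a, [:: a]) end.
Definition gimg (x : IX) : qpath n :=
  match x with inl v => (gv v, [::]) | inr a => (asrc (garr a), [:: garr a]) end.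
Definition coef (x : IX) : k :=
  match x with inl _ => 1 | inr a => if a.2 then mus a.1 else mu a.1 end.

Lemma kscale1 (f : KQ) : kscale 1 f = f.
Proof. by apply: functional_extensionality => p; rewrite /kscale mul1r. Qed.

Lemma G_bp x : G (kpath (bp x)) = kscale (coef x) (kpath (gimg x)).
Proof.
case: x => [v|[i b]] /=; first by rewrite kscale1; exact: HGe.
by case: b; [exact: HGs | exact: HGa].
Qed.

Lemma bp_inj : injective bp.
Proof.
case=> [v|a] [w|b] //= [].
- by move=> ->.
- by move=> _ ->.
Qed.

Lemma gv_inj v w : gv v = gv w -> v = w.
Proof.
move=> h; have ev (t : 'Z_n) : t = n%:R - d%:R - gv t by rewrite /gv; ring.
by rewrite (ev v) (ev w) h.
Qed.

Lemma garr_inj a b : garr a = garr b -> a = b.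
Proof.
case: a b => [a1 a2] [b1 b2] E.
have h : n%:R - (d%:R + a1 + 1) = n%:R - (d%:R + b1 + 1) :> 'Z_n := congr1 fst E.
have e : ~~ a2 = ~~ b2 := congr1 snd E.
have ev (t : 'Z_n) : t = n%:R - d%:R - 1 - (n%:R - (d%:R + t + 1)) by ring.
rewrite (ev a1) (ev b1) h.
by clear E; case: a2 b2 e => -[].
Qed.

Lemma gimg_inj : injective gimg.
Proof.
case=> [v|a] [w|b] E.
- by rewrite (gv_inj (congr1 fst E)).
- by have := congr1 (fun q => size q.2) E.
- by have := congr1 (fun q => size q.2) E.
- have : garr a = garr b := congr1 (fun q => nth (garr a) q.2 0) E.
  by move/garr_inj ->.
Qed.

Lemma G_kzero : G kzero = kzero.
Proof.
have e0 : forall f : KQ, kscale 0 f = kzero.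
  by move=> f; apply: functional_extensionality => p; rewrite /kscale mul0r.
have := (Glin.2.2 0 kzero (@inkQ_kzero n k)); by rewrite !e0.
Qed.

Lemma G_ksum (T : Type) (s : seq T) (F : T -> KQ) :
  (forall x, inkQ (F x)) -> G (ksum s F) = ksum s (fun x => G (F x)).
Proof.
move=> hF; elim: s => [|x s IH] /=; first exact: G_kzero.
rewrite Glin.2.1 ?IH //; exact: inkQ_ksum.
Qed.

Definition small (f : KQ) := forall p : qpath n, (1 < size p.2)%N -> f p = 0.

Lemma sum_ind (F : IX -> k) (g : IX -> qpath n) x0 :
  injective g ->
  \sum_(x : IX) F x * (g x0 == g x)%:R = F x0.
Proof.
move=> gi; rewrite (bigD1 x0) //= eqxx mulr1 big1 ?addr0 // => x hx.
by rewrite (inj_eq gi) eq_sym (negbTE hx) mulr0.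
Qed.

Lemma qeq_size (p q : qpath n) : size p.2 != size q.2 -> (p == q) = false.
Proof. by apply: contraNF => /eqP ->. Qed.

Lemma decomp (f : KQ) : inkQ f -> small f ->
  f = ksum (index_enum (IX)) (fun x => kscale (f (bp x)) (kpath (bp x))).
Proof.
move=> [fv _] fs; apply: functional_extensionality => p; rewrite ksumE.
rewrite /kscale; under eq_bigr => x _ do rewrite kpathE.
case: p => s [|a [|b l]].
- by rewrite (sum_ind (fun x => f (bp x)) (inl s) bp_inj).
- case: (eqVneq (asrc a) s) => e.
    by rewrite -e (sum_ind (fun x => f (bp x)) (inr a) bp_inj).
  rewrite fv; last by change (~~ ((asrc a == s) && true)); rewrite andbT.
  rewrite big1 // => x _; case: x => [v|c] /=; first by rewrite qeq_size ?mulr0.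
  rewrite xpair_eqE.
  case: (eqVneq s (asrc c)) => [ec|]; last by rewrite mulr0.
  by rewrite /= eqseq_cons; case: eqP => [ac|]; [rewrite ac ec eqxx in e | rewrite mulr0].
- by rewrite fs // big1 // => x _; case: x => [v|c] /=; rewrite qeq_size ?mulr0.
Qed.

Lemma G_eval (f : KQ) : inkQ f -> small f -> forall p,
  G f p = \sum_(x : IX) f (bp x) * (coef x * (p == gimg x)%:R).
Proof.
move=> fk fs p; rewrite {1}(decomp fk fs) G_ksum; last first.
  by move=> x; apply: inkQ_kscale; case: x => [v|a]; [exact: inkQ_ev | exact: inkQ_arr].
rewrite ksumE; apply: eq_bigr => x _.
rewrite Glin.2.2; last by case: x => [v|a]; [exact: inkQ_ev | exact: inkQ_arr].
by rewrite G_bp /kscale kpathE.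
Qed.

Lemma G_img (f : KQ) y : inkQ f -> small f -> G f (gimg y) = coef y * f (bp y).
Proof.
move=> fk fs; rewrite G_eval //.
under eq_bigr => x _ do rewrite mulrA [f _ * _]mulrC.
by rewrite (sum_ind (fun x => coef x * f (bp x)) y gimg_inj).
Qed.

Lemma G_small (f : KQ) : inkQ f -> small f -> small (G f).
Proof.
move=> fk fs p hp; rewrite G_eval // big1 // => x _.
by case: x => [v|a]; rewrite qeq_size ?mulr0 // /=; case: p hp => s [|a1 [|a2 l]].
Qed.

End D.


Section E.
Variables (n : nat) (k : fieldType).
Local Notation KQ := (KQ n k).
Variables (G X : KQ -> KQ).
Hypothesis Glin : kQ_linear G.
Hypothesis Xlin : kQ_linear X.
Hypothesis HGmul : forall f h, inkQ f -> inkQ h -> G (kmul f h) = kmul (G f) (G h).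
Hypothesis HXmul : forall f h, inkQ f -> inkQ h ->
     X (kmul f h) = kadd (kmul f (X h)) (kmul (X f) (G h)).

Lemma lin_opp (F : KQ -> KQ) f : kQ_linear F -> inkQ f -> F (kopp f) = kopp (F f).
Proof. by move=> Fl fk; rewrite !kopp_scale Fl.2.2. Qed.

Lemma inkQ_mul_arr a b : inkQ (kmul (arr a) (arr b) : KQ).
Proof. by apply: inkQ_kmul_kpath; rewrite /valid_path /= eqxx. Qed.

Lemma G_omega i : G (omega i) =
  kadd (kmul (G (ast i)) (G (a_ i))) (kopp (kmul (G (a_ (i + 1))) (G (ast (i + 1))))).
Proof.
rewrite /omega Glin.2.1; last 2 first.
- exact: inkQ_mul_arr.
- exact: inkQ_kopp (inkQ_mul_arr _ _).
rewrite (lin_opp Glin) ?HGmul //; try exact: inkQ_arr; exact: inkQ_mul_arr.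
Qed.

Lemma X_omega i : X (omega i) =
  kadd (kadd (kmul (ast i) (X (a_ i))) (kmul (X (ast i)) (G (a_ i))))
   (kopp (kadd (kmul (a_ (i + 1)) (X (ast (i + 1)))) (kmul (X (a_ (i + 1))) (G (ast (i + 1)))))).
Proof.
rewrite /omega Xlin.2.1; last 2 first.
- exact: inkQ_mul_arr.
- exact: inkQ_kopp (inkQ_mul_arr _ _).
rewrite (lin_opp Xlin) ?HXmul //; try exact: inkQ_arr; exact: inkQ_mul_arr.
Qed.

End E.


Ltac evalq := rewrite /kadd /kopp /kscale ?kmul2 ?kmul1 ?kmul0 /a_ /ast /ev /arr ?kpathE /asrc /atgt /=;
  rewrite ?xpair_eqE ?eqseq_cons ?xpair_eqE /= ?subrK ?eqxx ?andbT ?andbF /=.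

Ltac from_eq e := move/eqP: e; rewrite -subr_eq0 => /eqP e; rewrite -[RHS]e; ring.

Theorem lemma3p13
  (k : fieldType) (r m : nat) (lam : k) (n d : nat)
  (G X : KQ n k -> KQ n k) (mu mus gam : 'Z_n -> k) :
  (1 < r)%N -> (r %| m)%N -> r.-primitive_root lam -> (r%:R : k) != 0 ->
  (3 <= n)%N -> (d <= n.-1)%N ->
  taft_module_algebra r m lam G X ->
  inner_faithful r m lam G X ->
  x_linear X ->
  (forall i, G (ev i) = ev (n%:R - (d%:R + i))) ->
  (forall i, G (a_ i) = kscale (mu i) (ast (n%:R - (d%:R + i + 1)))) ->
  (forall i, G (ast i) = kscale (mus i) (a_ (n%:R - (d%:R + i + 1)))) ->
  (forall i, mu i != 0) -> (forall i, mus i != 0) ->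
  (forall f, inOmega f -> inOmega (G f) /\ inOmega (X f)) ->
  (forall i, X (ev i) =
     kadd (kscale (gam i) (ev i)) (kscale (- (gam i * lam^-1)) (ev (n%:R - (d%:R + i))))) ->
  (forall (j : 'Z_n) (cj cjs : k),
     n%:R - (d%:R + j) = j ->
     sigma lam G X gam (j, false) = kscale cj (ast (j - 1)) ->
     sigma lam G X gam (j, true) = kscale cjs (ast j) ->
     cjs = - ((mu j)^-1 * cj) /\ (cj != 0 -> forall i, mu i * mus i = 1))
  /\
  (forall (kk : 'Z_n) (ck cks : k),
     n%:R - (d%:R + kk) = kk + 1 ->
     n%:R - (d%:R + (kk + 1)) = kk ->
     sigma lam G X gam (kk, false) = kscale ck (ev kk) ->
     sigma lam G X gam (kk, true) = kscale cks (ev (kk + 1)) ->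
     (forall i : 'Z_n, inOmega
        (kadd (kadd (kmul (ast i) (sigma lam G X gam (i, false)))
                    (kmul (sigma lam G X gam (i, true)) (G (a_ i))))
              (kopp (kadd (kmul (a_ (i + 1)) (sigma lam G X gam (i + 1, true)))
                          (kmul (sigma lam G X gam (i + 1, false)) (G (ast (i + 1)))))))) ->
     ck = - (mu kk * cks) /\ (ck != 0 -> lam = -1 /\ (forall i, mu i * mus i = 1))).
Proof.
move=> hr hrm prim hr0 hn hd TM IF XL HGe HGa HGs hmu hmus HOm HXe.
have Glin := tma_G_lin TM; have Xlin := tma_X_lin TM.
have Hgx := tma_gx TM; have HGmul := tma_G_mul TM; have HXmul := tma_X_mul TM.
have lam1 : lam != 1.
  apply/negP => /eqP e; have := prim_order_dvd prim 1; rewrite e expr1 eqxx.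
  by rewrite dvdn1 => /eqP r1; rewrite r1 in hr.
have lam0 : lam != 0.
  apply/negP => /eqP e; have := prim_expr_order prim; rewrite e expr0n.
  have r0 : (r == 0)%N = false by case: (r) hr.
  by rewrite r0 => /esym/eqP; rewrite oner_eq0.
have Xarr a p : X (arr a) p = sigma lam G X gam a p + gam (atgt a) * arr a p
     - gam (asrc a) * lam^-1 * G (arr a) p.
  by rewrite /sigma /kadd /kscale; ring.
have qc i : mu i * mus i = mu (i + 1) * mus (i + 1).
  have h := (HOm _ (@inOmega_omega n k i)).1.
  have := inOmega_phi (n%:R - (d%:R + i + 1)) h.
  rewrite (G_omega Glin HGmul) HGs HGa HGa HGs.
  have -> : n%:R - (d%:R + (i + 1) + 1) = n%:R - (d%:R + i + 1) - 1 :> 'Z_n by ring.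
  set v := n%:R - _.
  evalq => h0.
  by apply/eqP; rewrite -subr_eq0; apply/eqP; rewrite -[RHS]h0; ring.
have qall i j : mu i * mus i = mu j * mus j.
  have qn (t : nat) : mu i * mus i = mu (i + t%:R) * mus (i + t%:R).
    elim: t => [|t IH]; first by rewrite addr0.
    by rewrite IH qc -natr1 addrA.
  by rewrite (qn (nat_of_ord (j - i))) natr_Zp addrC subrK.
have Gimg := G_img Glin HGe HGa HGs.
have iev := @inkQ_ev n k; have iarr := @inkQ_arr n k.
have Xk a : inkQ (X (arr a)) by apply: Xlin.1; exact: inkQ_arr.
have Xs a : small (X (arr a)) by move=> p hp; apply: XL.2.
split.
- move=> j cj cjs hj hsa hsas.
  have hj1 : n%:R - (d%:R + j + 1) = j - 1 :> 'Z_n by rewrite -[in RHS]hj; ring.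
  have gj0 : gam j = 0.
    have e1 := congr1 (fun F => F (j, [::])) (Hgx _ (iev j)).
    have L : G (X (ev j)) (j, [::]) = 1 * X (ev j) (j, [::]).
      have := Gimg (X (ev j)) (inl j) (Xlin.1 _ (iev j)) _.
      rewrite /gimg /gv hj; apply => p hp; apply: XL.1; exact: ltnW hp.
    move: e1 => /=; rewrite L HGe hj HXe hj; evalq => e1.
    have : gam j * (1 - lam^-1) * (1 - lam) = 0.
      from_eq e1.
    move/eqP; rewrite !mulf_eq0 !subr_eq0 => /orP[/orP[/eqP //|]|]; last by rewrite eq_sym (negbTE lam1).
    by rewrite eq_sym invr_eq1 (negbTE lam1).
  have e1 : cj + mu j * cjs = 0.
    have h := (HOm _ (@inOmega_omega n k j)).2.
    have := inOmega_S1 (p := (j + 1, [:: (j, true); (j - 1, true)])) h erefl.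
    rewrite (X_omega Xlin HXmul) /kadd /kopp !kmul2.
    rewrite !Xarr hsa hsas !HGa !HGs !hj1.
    by evalq => h0; rewrite -[RHS]h0 gj0; ring.
  have ecjs : cjs = - ((mu j)^-1 * cj).
    have -> : cj = - (mu j * cjs) by rewrite -[cj]subr0 -e1; ring.
    by rewrite mulrN opprK mulrA mulVf // mul1r.
  split => // cj0.
  have hjm : n%:R - (d%:R + (j - 1) + 1) = j :> 'Z_n by rewrite -[in RHS]hj; ring.
  have EA : mu (j - 1) * X (a_ (j - 1)) (j - 1, [:: (j - 1, false)]) = lam * (mu (j - 1) * cjs).
    have L := Gimg _ (inr ((j - 1, false) : arrow n)) (Xk (j - 1, false)) (Xs _).
    have e := congr1 (fun F => F (gimg d (inr ((j - 1, false) : arrow n)))) (Hgx _ (iarr (j - 1, false))).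
    have GaJ : G (a_ (j - 1)) = kscale (mu (j - 1)) (ast j).
      by rewrite HGa; congr (kscale _ (ast _)); exact: hjm.
    have iaj : inkQ (ast j) := iarr (j, true).
    rewrite /= L GaJ Xlin.2.2 // /gimg /= in e.
    set t := garr _ _ in e.
    rewrite (_ : t = (j, true)) in e; last by rewrite /t; congr pair; exact: hjm.
    rewrite /kscale !(Xarr (j, true)) hsas !HGs hj1 in e.
    by move: e; evalq => e; rewrite e gj0; ring.
  have EB : mu j * X (ast (j - 1)) (j, [:: (j, false)]) = lam * (mus (j - 1) * cj).
    have L := Gimg _ (inr ((j, false) : arrow n)) (Xk (j - 1, true)) (Xs _).
    have e := congr1 (fun F => F (gimg d (inr ((j, false) : arrow n)))) (Hgx _ (iarr (j - 1, true))).
    have GsJ : G (ast (j - 1)) = kscale (mus (j - 1)) (a_ j).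
      by rewrite HGs; congr (kscale _ (a_ _)); exact: hjm.
    have iaj : inkQ (a_ j) := iarr (j, false).
    rewrite /= L GsJ Xlin.2.2 // /gimg /= in e.
    set t := garr _ _ in e.
    rewrite (_ : t = (j - 1, true)) in e; last by rewrite /t; congr pair; exact: hj1.
    rewrite /kscale !(Xarr (j, false)) hsa !HGa hj1 in e.
    by move: e; evalq => e; rewrite e gj0; ring.
  have EO := inOmega_phi j (HOm _ (@inOmega_omega n k (j - 1))).2.
  have GaJ : G (a_ (j - 1)) = kscale (mu (j - 1)) (ast j).
    by rewrite HGa; congr (kscale _ (ast _)); exact: hjm.
  rewrite (X_omega Xlin HXmul) subrK /kadd /kopp !kmul2 in EO.
  rewrite !(Xarr (j, true)) !(Xarr (j, false)) hsa hsas GaJ !HGa !HGs !hj1 in EO.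
  move: EA EB EO; evalq => EA EB EO.
  set al := X (kpath (j - 1, _)) (j - 1, _) in EA EO.
  set be := X (kpath (j, _)) (j, [:: (j, false)]) in EB EO.
  have hmj := hmu j; have hmj1 := hmu (j - 1).
  have ea : al = lam * cjs by apply: (mulfI hmj1); rewrite EA; ring.
  have eb : be = lam * mus (j - 1) * cj / mu j.
    by apply: (mulfI hmj); rewrite EB; field.
  have emus : mus (j - 1) = mu j * mus j / mu (j - 1).
    have := qc (j - 1); rewrite subrK => h; apply: (mulfI hmj1); rewrite h.
    by field.
  have key : cj * (1 - lam) * (1 - mu j * mus j) = 0.
    rewrite -[RHS](mulr0 (mu j)) -EO gj0 ea eb ecjs emus. field; by rewrite lam0 hmj hmj1.
  move/eqP: key; rewrite !mulf_eq0 (negbTE cj0) subr_eq0 eq_sym (negbTE lam1) /= subr_eq0.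
  by move=> /eqP h i; rewrite (qall i j) -h.
move=> kk ck cks h1 h2 hsa hsas hbr.
have hk1 : n%:R - (d%:R + kk + 1) = kk :> 'Z_n.
  rewrite (_ : n%:R - (d%:R + kk + 1) = n%:R - (d%:R + kk) - 1); last by ring.
  by rewrite h1 addrK.
have GaK : G (a_ kk) = kscale (mu kk) (ast kk).
  by rewrite HGa; congr (kscale _ (ast _)); exact: hk1.
have GsK : G (ast kk) = kscale (mus kk) (a_ kk).
  by rewrite HGs; congr (kscale _ (a_ _)); exact: hk1.
have e1 : ck + mu kk * cks = 0.
  have := inOmega_S2 (p := (kk + 1, [:: (kk, true)])) (hbr kk) erefl.
  rewrite /kadd /kopp !kmul1 hsa hsas GaK !HGs.
  by evalq => h0; rewrite -[RHS]h0; ring.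
have ec : ck = - (mu kk * cks) by rewrite -[ck]subr0 -e1; ring.
split => // ck0.
have iak : inkQ (ast kk) := iarr (kk, true).
have iak' : inkQ (a_ kk) := iarr (kk, false).
have Xk0 : X (a_ kk) (kk, [::]) = ck.
  by rewrite Xarr hsa GaK; evalq; ring.
have Xs0 : X (ast kk) (kk + 1, [::]) = cks.
  by rewrite Xarr hsas GsK; evalq; ring.
have L := Gimg _ (inl kk) (Xk (kk, false)) (Xs _).
rewrite /gimg (_ : gv d kk = kk + 1) in L; last exact: h1.
have GX1 : G (X (a_ kk)) (kk + 1, [::]) = ck by rewrite L /= mul1r Xk0.
have lm : lam = -1.
  have e := congr1 (fun F => F (kk + 1, [::])) (Hgx _ iak').
  rewrite /= GX1 GaK Xlin.2.2 // /kscale Xs0 in e.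
  have mc : mu kk * cks != 0 by rewrite -oppr_eq0 -ec.
  apply: (mulIf mc); rewrite mulN1r -ec; exact: esym e.
split => //.
have L2 := Gimg _ (inl (kk + 1)) (Glin.1 _ (Xk (kk, false))) (G_small Glin HGe HGa HGs (Xk _) (Xs _)).
rewrite /gimg (_ : gv d (kk + 1) = kk) in L2; last exact: h2.
have E := congr1 (fun F => G F (kk, [::])) (Hgx _ (iarr (kk, false))).
have ik1 : inkQ (X (ast kk)) := Xk (kk, true).
have ik2 : inkQ (kscale (mu kk) (X (ast kk))) := inkQ_kscale _ ik1.
have E2 : ck = G (kscale lam (X (G (a_ kk)))) (kk, [::]).
  apply: etrans E; apply: esym; apply: etrans L2 _; rewrite /= mul1r; exact: GX1.
clear E; move: E2 => E; rewrite GaK Xlin.2.2 // Glin.2.2 in E; last exact: ik2.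
rewrite (Glin.2.2 (mu kk) (X (ast kk)) ik1) Hgx // GsK Xlin.2.2 // /kscale Xk0 lm in E.
have : ck * (1 - mu kk * mus kk) = 0 by from_eq E.
move/eqP; rewrite mulf_eq0 (negbTE ck0) subr_eq0 /= => /eqP h i.
by rewrite (qall i kk) -h.
Qed.
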